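(* Let $(R,\mathfrak{m})$ be a Noetherian local ring and $I$ an $R$-ideal of analytic spread $\ell$. Let $s\ge 0$ be an integer, let $f_1,\ldots,f_{\ell+s}$ be elements of $I$, and set $\mathfrak{a}=(f_1,\ldots,f_{\ell-1})$ and $K=(f_1,\ldots,f_{\ell+s})$. Let $\varphi:\mathcal{F}(K)\to\mathcal{F}(I)$ be the natural map of special fiber rings. Then \[I^n=(f_1,\ldots,f_{\ell-1})I^{n-1}+(f_\ell,\ldots,f_{\ell+s})^n\quad\text{for all } n\gg0\] if and only if $\operatorname{coker}(\varphi)$ is a finite $\mathcal{F}(\mathfrak{a})$-module.
   Context: For an ideal $L$ of the local ring $(R,\mathfrak{m})$, $\mathcal{F}(L)=\bigoplus_{m\ge0}L^m/\mathfrak{m}L^m$ is the special fiber ring and $\ell(L)=\dim\mathcal{F}(L)$ is the analytic spread. The natural maps $\mathcal{F}(K)\to\mathcal{F}(I)$ and $\mathcal{F}(\mathfrak{a})\to\mathcal{F}(I)$ are induced by the inclusions $K\subset I$, $\mathfrak{a}\subset I$; $\operatorname{coker}(\varphi)$ is an $\mathcal{F}(\mathfrak{a})$-module via the latter. *)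

(* Defs.v *)
From HB Require Import structures.
From mathcomp Require Import all_boot all_order all_algebra.
Set Implicit Arguments. Unset Strict Implicit. Unset Printing Implicit Defensive.
Import Order.TTheory GRing.Theory Num.Theory.
Local Open Scope ring_scope.

Section Defs.
Variable R : comUnitRingType.

Definition ideal (I : R -> Prop) : Prop :=
  [/\ I 0, (forall x y, I x -> I y -> I (x + y)) & (forall r x, I x -> I (r * x))].

Definition span_range (f : nat -> R) (lo hi : nat) : R -> Prop :=
  fun x => exists c : nat -> R, x = \sum_(lo <= i < hi) c i * f i.

Definition ideal_add (I J : R -> Prop) : R -> Prop :=
  fun x => exists a b, [/\ I a, J b & x = a + b].

Definition ideal_mul (I J : R -> Prop) : R -> Prop :=
  fun x => exists (n : nat) (a b : nat -> R),
    [/\ forall i, I (a i), forall i, J (b i) & x = \sum_(i < n) a i * b i].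

Fixpoint ideal_pow (I : R -> Prop) (n : nat) : R -> Prop :=
  match n with
  | 0 => fun _ => True
  | k.+1 => ideal_mul I (ideal_pow I k)
  end.

Definition noetherian : Prop :=
  forall I, ideal I -> exists (n : nat) (g : nat -> R),
    forall x, I x <-> span_range g 0 n x.

Definition is_local_max (m : R -> Prop) : Prop :=
  [/\ ideal m, ~ m 1 & forall x, ~ m x -> x \is a GRing.unit].

(* Representatives of elements of a graded object  (+)_n D n :
   finitely supported sequences with g n in D n. *)
Definition homog_rep (D : nat -> R -> Prop) (g : nat -> R) : Prop :=
  (forall n, D n (g n)) /\ exists N, forall n, (N <= n)%N -> g n = 0.

(* graded (convolution) product of representatives *)
Definition conv (g h : nat -> R) : nat -> R :=
  fun n => \sum_(i < n.+1) g i * h (n - i)%N.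

Definition fib_one : nat -> R := fun n => if n is 0 then 1 else 0.

(* Special fiber ring F(L) = (+)_n L^n / m L^n, represented by
   representatives modulo componentwise  m L^n.
   A prime ideal of F(L), given by the set of its representatives. *)
Definition fiber_prime (m L : R -> Prop) (P : (nat -> R) -> Prop) : Prop :=
  let rep := homog_rep (ideal_pow L) in
  [/\ forall g, rep g -> (forall n, ideal_mul m (ideal_pow L n) (g n)) -> P g,
      forall g h, rep g -> rep h -> P g -> P h -> P (fun n => g n + h n),
      forall g h, rep g -> rep h -> P h -> P (conv g h),
      ~ P fib_one &
      forall g h, rep g -> rep h -> P (conv g h) -> P g \/ P h].

Definition fiber_strict (m L : R -> Prop) (P Q : (nat -> R) -> Prop) : Prop :=
  let rep := homog_rep (ideal_pow L) in
  (forall g, rep g -> P g -> Q g) /\ exists g, [/\ rep g, Q g & ~ P g].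

Definition fiber_chain (m L : R -> Prop) (P : nat -> (nat -> R) -> Prop) (d : nat)
  : Prop :=
  (forall i, (i <= d)%N -> fiber_prime m L (P i)) /\
  (forall i, (i < d)%N -> fiber_strict m L (P i) (P i.+1)).

Definition analytic_spread (m L : R -> Prop) (l : nat) : Prop :=
  (exists P, fiber_chain m L P l) /\ (forall P, ~ fiber_chain m L P l.+1).

(* coker(phi) = (+)_n I^n / (K^n + m I^n) is a finitely generated
   F(a)-module: finitely many elements gs generate it over F(a). *)
Definition coker_finite (m I K a : R -> Prop) : Prop :=
  exists (r : nat) (gs : 'I_r -> nat -> R),
    (forall i, homog_rep (ideal_pow I) (gs i)) /\
    forall y, homog_rep (ideal_pow I) y ->
      exists cs : 'I_r -> nat -> R,
        (forall i, homog_rep (ideal_pow a) (cs i)) /\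
        forall n, ideal_add (ideal_pow K n) (ideal_mul m (ideal_pow I n))
                    (y n - \sum_(i < r) conv (cs i) (gs i) n).

End Defs.

(* Main.v *)
Require Import Defs.
From mathcomp Require Import all_boot all_order all_algebra zify.
Set Implicit Arguments. Unset Strict Implicit. Unset Printing Implicit Defensive.
Import GRing.Theory.
Local Open Scope ring_scope.


Lemma id0 {R : comUnitRingType} (C : R -> Prop) : ideal C -> C 0.
Proof. by case. Qed.
Lemma idD {R : comUnitRingType} (C : R -> Prop) x y : ideal C -> C x -> C y -> C (x + y).
Proof. by case=> _ H _; apply: H. Qed.
Lemma idM {R : comUnitRingType} (C : R -> Prop) r x : ideal C -> C x -> C (r * x).
Proof. by case=> _ _ H; apply: H. Qed.
Lemma idMr {R : comUnitRingType} (C : R -> Prop) r x : ideal C -> C x -> C (x * r).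
Proof. by move=> iC Cx; rewrite mulrC; apply: idM. Qed.
Lemma idN {R : comUnitRingType} (C : R -> Prop) x : ideal C -> C x -> C (- x).
Proof. by move=> iC Cx; rewrite -mulN1r; apply: idM. Qed.
Lemma idB {R : comUnitRingType} (C : R -> Prop) x y : ideal C -> C x -> C y -> C (x - y).
Proof. by move=> iC Cx Cy; apply: idD => //; apply: idN. Qed.

Lemma id_sum {R : comUnitRingType} (C : R -> Prop) (I : Type) (r : seq I) (P : pred I) F :
  C 0 -> (forall x y, C x -> C y -> C (x + y)) ->
  (forall i, P i -> C (F i)) -> C (\sum_(i <- r | P i) F i).
Proof. move=> C0 CD CF; elim/big_ind: _ => //. Qed.

Lemma mul_in {R : comUnitRingType} (A B : R -> Prop) a b :
  A a -> B b -> ideal_mul A B (a * b).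
Proof.
move=> Aa Bb; exists 1%N, (fun _ => a), (fun _ => b); split=> //.
by rewrite big_ord1.
Qed.

Lemma mul_sub {R : comUnitRingType} (A B C : R -> Prop) :
  C 0 -> (forall x y, C x -> C y -> C (x + y)) ->
  (forall a b, A a -> B b -> C (a * b)) -> forall x, ideal_mul A B x -> C x.
Proof.
move=> C0 CD H x [n [a [b [Ha Hb ->]]]].
by apply: id_sum => // i _; apply: H.
Qed.

Lemma mul_ideal {R : comUnitRingType} (A B : R -> Prop) :
  ideal A -> ideal B -> ideal (ideal_mul A B).
Proof.
move=> iA iB; split.
- exists 0%N, (fun _ => 0), (fun _ => 0); split=> //; try by move=> _; apply: id0.
  by rewrite big_ord0.
- move=> x y [n [a [b [Ha Hb ->]]]] [n' [a' [b' [Ha' Hb' ->]]]].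
  exists (n + n')%N, (fun i => if (i < n)%N then a i else a' (i - n)%N),
    (fun i => if (i < n)%N then b i else b' (i - n)%N); split.
  + by move=> i; case: ifP.
  + by move=> i; case: ifP.
  rewrite big_split_ord /=; congr (_ + _).
    by apply: eq_bigr => i _; rewrite /= ltn_ord.
  by apply: eq_bigr => i _; rewrite /= ltnNge leq_addr /= addKn.
- move=> r x [n [a [b [Ha Hb ->]]]].
  exists n, (fun i => r * a i), b; split => //.
    by move=> i; apply: idM.
  by rewrite big_distrr; apply: eq_bigr => i _ /=; rewrite mulrA.
Qed.

Lemma pow_ideal {R : comUnitRingType} (I : R -> Prop) n : ideal I -> ideal (ideal_pow I n).
Proof.
move=> iI; elim: n => [|n IH] /=; first by split.
exact: mul_ideal.
Qed.

Lemma add_ideal {R : comUnitRingType} (A B : R -> Prop) :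
  ideal A -> ideal B -> ideal (ideal_add A B).
Proof.
move=> iA iB; split.
- by exists 0, 0; split; rewrite ?addr0 //; apply: id0.
- move=> x y [a [b [Aa Bb ->]]] [a' [b' [Aa' Bb' ->]]].
  exists (a + a'), (b + b'); split; try by apply: idD.
  by rewrite addrACA.
- move=> r x [a [b [Aa Bb ->]]].
  by exists (r * a), (r * b); split; try apply: idM; rewrite // mulrDr.
Qed.

Lemma add_inl {R : comUnitRingType} (A B : R -> Prop) x : ideal B -> A x -> ideal_add A B x.
Proof. by move=> iB Ax; exists x, 0; split; rewrite ?addr0 //; apply: id0. Qed.
Lemma add_inr {R : comUnitRingType} (A B : R -> Prop) x : ideal A -> B x -> ideal_add A B x.
Proof. by move=> iA Bx; exists 0, x; split; rewrite ?add0r //; apply: id0. Qed.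

Lemma span_ideal {R : comUnitRingType} (f : nat -> R) lo hi : ideal (span_range f lo hi).
Proof.
split.
- by exists (fun _ => 0); rewrite big1 // => i _; rewrite mul0r.
- move=> x y [c ->] [c' ->]; exists (fun i => c i + c' i).
  by rewrite -big_split; apply: eq_bigr => i _; rewrite mulrDl.
- move=> r x [c ->]; exists (fun i => r * c i).
  by rewrite big_distrr; apply: eq_bigr => i _ /=; rewrite mulrA.
Qed.

Lemma span_sub {R : comUnitRingType} (f : nat -> R) lo hi (C : R -> Prop) :
  ideal C -> (forall i, (lo <= i < hi)%N -> C (f i)) -> forall x, span_range f lo hi x -> C x.
Proof.
move=> iC H x [c ->]; rewrite big_nat_cond.
apply: id_sum; [exact: id0 iC | by move=> ? ?; apply: idD |].
move=> i /andP[Hi _]; apply: idM => //; exact: H.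
Qed.

Lemma span_gen {R : comUnitRingType} (f : nat -> R) lo hi i :
  (lo <= i < hi)%N -> span_range f lo hi (f i).
Proof.
move=> Hi; exists (fun j => if j == i then 1 else 0).
rewrite (bigD1_seq i) ?mem_index_iota ?iota_uniq //=.
rewrite eqxx mul1r big1 ?addr0 // => j /negPf ->; by rewrite mul0r.
Qed.


Lemma mul_ideal_sub {R : comUnitRingType} (A B C : R -> Prop) :
  ideal C -> (forall a b, A a -> B b -> C (a * b)) -> forall x, ideal_mul A B x -> C x.
Proof. move=> iC; apply: mul_sub; [exact: id0 | by move=> ? ?; apply: idD]. Qed.

Lemma pow_mono {R : comUnitRingType} (A B : R -> Prop) n :
  ideal B -> (forall x, A x -> B x) -> forall x, ideal_pow A n x -> ideal_pow B n x.
Proof.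
move=> iB AB; elim: n => [//|n IH] x /=.
apply: mul_ideal_sub; first by apply: (pow_ideal n.+1 iB).
by move=> a b Aa Bb; apply: mul_in; [apply: AB | apply: IH].
Qed.

Lemma powmul {R : comUnitRingType} (I : R -> Prop) p q x y :
  ideal I -> ideal_pow I p x -> ideal_pow I q y -> ideal_pow I (p + q) (x * y).
Proof.
move=> iI; elim: p x => [|p IH] x Hx Hy /=.
  by rewrite add0n; apply: idM => //; apply: pow_ideal.
pose C z := ideal_pow I (p + q).+1 (z * y).
have iC : ideal (ideal_pow I (p + q).+1) by apply: pow_ideal.
apply: (@mul_sub _ I (ideal_pow I p) C) Hx.
- by rewrite /C mul0r; apply: id0.
- by move=> u v; rewrite /C mulrDl; apply: idD.
- by move=> a b Ia Pb; rewrite /C -mulrA; apply: mul_in => //; apply: IH.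
Qed.

Lemma in_pow1 {R : comUnitRingType} (I : R -> Prop) x : I x -> ideal_pow I 1 x.
Proof. by move=> Ix; rewrite -[x]mulr1; apply: mul_in. Qed.

Lemma pow1_in {R : comUnitRingType} (I : R -> Prop) x : ideal I -> ideal_pow I 1 x -> I x.
Proof. by move=> iI; apply: mul_ideal_sub => // a b Ia _; apply: idMr. Qed.

Lemma aI_mul {R : comUnitRingType} (a I : R -> Prop) k n u v :
  ideal a -> ideal I -> (forall x, a x -> I x) -> (1 <= k <= n)%N ->
  ideal_pow a k u -> ideal_pow I (n - k) v -> ideal_mul a (ideal_pow I n.-1) (u * v).
Proof.
move=> ia iI aI; case: k => [//|k] /= Hk Hu Hv.
pose C z := ideal_mul a (ideal_pow I n.-1) (z * v).
have iC : ideal (ideal_mul a (ideal_pow I n.-1)) by apply: mul_ideal => //; apply: pow_ideal.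
apply: (@mul_sub _ a (ideal_pow a k) C) Hu.
- by rewrite /C mul0r; apply: id0.
- by move=> x y; rewrite /C mulrDl; apply: idD.
move=> x y ax Py; rewrite /C -mulrA; apply: mul_in => //.
have -> : n.-1 = (k + (n - k.+1))%N by lia.
apply: powmul => //; exact: (pow_mono iI aI).
Qed.


Lemma KJ {R : comUnitRingType} (a J K I : R -> Prop) n :
  ideal a -> ideal J -> ideal I ->
  (forall x, a x -> I x) -> (forall x, J x -> I x) ->
  (forall x, K x -> ideal_add a J x) -> (1 <= n)%N ->
  forall x, ideal_pow K n x -> ideal_add (ideal_mul a (ideal_pow I n.-1)) (ideal_pow J n) x.
Proof.
move=> ia iJ iI aI JI KaJ; elim: n => [//|n IH] _.
have iT : ideal (ideal_add (ideal_mul a (ideal_pow I n)) (ideal_pow J n.+1)).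
  by apply: add_ideal; [apply: mul_ideal => //; apply: pow_ideal | apply: pow_ideal].
have KI : forall x, K x -> I x.
  move=> x /KaJ [u [v [au Jv ->]]]; apply: idD => //; [exact: aI | exact: JI].
apply: mul_ideal_sub => // k w /KaJ [al [be [aal Jbe ->]]] Kw.
rewrite mulrDl; apply: idD => //.
  apply: add_inl; first exact: pow_ideal.
  by apply: mul_in => //; apply: (pow_mono iI KI).
case: n iT IH Kw => [|n] iT IH Kw.
  by apply: add_inr; [apply: mul_ideal => //; apply: pow_ideal | apply: mul_in].
have := IH isT w Kw => -[u [v [Hu Hv ->]]].
rewrite mulrDr; apply: idD => //; last first.
  by apply: add_inr; [apply: mul_ideal => //; apply: pow_ideal | apply: mul_in].
apply: add_inl; first exact: pow_ideal.
rewrite mulrC.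
have iC : ideal (ideal_mul a (ideal_pow I n.+2.-1)) by apply: mul_ideal => //; apply: pow_ideal.
apply: (@mul_sub _ a (ideal_pow I n) (fun z => ideal_mul a (ideal_pow I n.+2.-1) (z * be))) Hu.
- by rewrite mul0r; apply: id0.
- by move=> ? ?; rewrite mulrDl; apply: idD.
move=> al' w' aal' Iw' /=.
rewrite -mulrA; apply: mul_in => //=; rewrite mulrC.
by apply: mul_in => //; apply: JI.
Qed.

Lemma span_split {R : comUnitRingType} (f : nat -> R) lo mid hi x :
  (lo <= mid <= hi)%N -> span_range f lo hi x ->
  ideal_add (span_range f lo mid) (span_range f mid hi) x.
Proof.
move=> /andP[h1 h2] [c ->]; rewrite (@big_cat_nat _ _ _ mid lo hi _ _ h1 h2).
by exists (\sum_(lo <= i < mid) c i * f i), (\sum_(mid <= i < hi) c i * f i); split=> //; exists c.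
Qed.

Lemma span_mono {R : comUnitRingType} (f : nat -> R) lo hi lo' hi' x :
  (lo' <= lo)%N -> (hi <= hi')%N -> span_range f lo hi x -> span_range f lo' hi' x.
Proof.
move=> h1 h2; apply: span_sub; first exact: span_ideal.
move=> i /andP[a b]; apply: span_gen; apply/andP; split; lia.
Qed.


Lemma nak {R : comUnitRingType} (m : R -> Prop) p (g : nat -> R) :
  is_local_max m -> forall L : R -> Prop, ideal L ->
  (forall t, (t < p)%N -> exists l mu, [/\ L l, (forall k, m (mu k)) &
      g t = l + \sum_(0 <= k < p) mu k * g k]) ->
  forall t, (t < p)%N -> L (g t).
Proof.
move=> [im m1 mU]; elim: p => [//|p IH] L iL H.
pose L' := ideal_add L (span_range g p p.+1).
have iL' : ideal L' by apply: add_ideal => //; apply: span_ideal.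
have spanE : forall x, span_range g p p.+1 x -> exists c, x = c * g p.
  by move=> x [c ->]; rewrite big_nat1; exists (c p).
have H' : forall t, (t < p)%N -> L' (g t).
  apply: IH => // t tp.
  have [l [mu [Ll mm ->]]] := H t (ltnW tp).
  exists (l + mu p * g p), mu; split=> //.
    by exists l, (mu p * g p); split=> //; exists (fun _ => mu p); rewrite big_nat1.
  by rewrite big_nat_recr //= addrAC addrA.
pose S x := exists l nu, [/\ L l, m nu & x = l + nu * g p].
have S0 : S 0 by exists 0, 0; split; rewrite ?mul0r ?addr0 //; apply: id0.
have SD : forall x y, S x -> S y -> S (x + y).
  move=> x y [l [nu [Ll mn ->]]] [l' [nu' [Ll' mn' ->]]].
  exists (l + l'), (nu + nu'); split; try by apply: idD.
  by rewrite mulrDl addrACA.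
have Hp : L (g p).
  have [l [mu [Ll mm E]]] := H p (ltnSn p).
  have : S (\sum_(0 <= k < p) mu k * g k).
    rewrite big_nat_cond; apply: id_sum => // k /andP[/andP[_ kp] _].
    have [l' [y [Ll' /spanE [c ->] ->]]] := H' k kp.
    exists (mu k * l'), (mu k * c); split; try by apply: idM.
      by apply: idMr.
    by rewrite mulrDr mulrA.
  move=> [l2 [nu [Ll2 mnu E2]]].
  move: E; rewrite big_nat_recr //= E2 => E.
  have Hu : (1 - (nu + mu p)) \is a GRing.unit.
    apply: mU => Hm; apply: m1.
    have -> : (1 : R) = (1 - (nu + mu p)) + (nu + mu p) by rewrite subrK.
    by apply: idD => //; apply: idD.
  have E3 : (1 - (nu + mu p)) * g p = l + l2.
    apply/eqP; rewrite mulrBl mul1r subr_eq {1}E mulrDl; apply/eqP.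
    by rewrite !addrA.
  have -> : g p = (1 - (nu + mu p))^-1 * (l + l2) by rewrite -E3 mulKr.
  by apply: idM => //; apply: idD.
move=> t; rewrite ltnS leq_eqVlt => /orP[/eqP -> //| tp].
have [l' [y [Ll' /spanE [c ->] ->]]] := H' t tp.
by apply: idD => //; apply: idM.
Qed.

Lemma mM_span {R : comUnitRingType} (m M : R -> Prop) p (g : nat -> R) :
  ideal m -> (forall x, M x <-> span_range g 0 p x) ->
  forall y, ideal_mul m M y -> exists mu, (forall k, m (mu k)) /\
     y = \sum_(0 <= k < p) mu k * g k.
Proof.
move=> im HM; apply: mul_sub.
- by exists (fun _ => 0); split; [move=> _; apply: id0 | rewrite big1 // => k _; rewrite mul0r].
- move=> x y [mu [mm ->]] [mu' [mm' ->]]; exists (fun k => mu k + mu' k); split.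
    by move=> k /=; apply: idD.
  by rewrite -big_split; apply: eq_bigr => k _; rewrite mulrDl.
- move=> a b ma /HM [c ->]; exists (fun k => a * c k); split.
    by move=> k; apply: idMr.
  by rewrite big_distrr; apply: eq_bigr => k _ /=; rewrite mulrA.
Qed.

Lemma nak_main {R : comUnitRingType} (m L M : R -> Prop) p (g : nat -> R) :
  is_local_max m -> ideal L -> (forall x, M x <-> span_range g 0 p x) ->
  (forall x, M x -> ideal_add L (ideal_mul m M) x) -> forall x, M x -> L x.
Proof.
move=> lm iL HM H.
have Hg : forall t, (t < p)%N -> L (g t).
  apply: (nak lm iL) => t tp.
  have Mg : M (g t) by apply/HM; apply: span_gen.
  have [l [y [Ll my ->]]] := H _ Mg.
  have [|mu [mm ->]] := mM_span _ HM my; first by case: lm.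
  by exists l, mu.
move=> x /HM; apply: span_sub => // i /andP[_]; exact: Hg.
Qed.


Lemma back_inc {R : comUnitRingType} (I a J : R -> Prop) n x :
  ideal I -> (forall x, a x -> I x) -> (forall x, J x -> I x) ->
  ideal_add (ideal_mul a (ideal_pow I n.+1.-1)) (ideal_pow J n.+1) x -> ideal_pow I n.+1 x.
Proof.
move=> iI aI JI [u [v [Hu Hv ->]]]; apply: idD; first exact: pow_ideal.
  move: Hu; apply: mul_ideal_sub; first exact: (pow_ideal n.+1 iI).
  by move=> al w /aI Ial Iw; apply: mul_in.
exact: (pow_mono iI JI).
Qed.

Lemma dir_back {R : comUnitRingType} (m I : R -> Prop) (l s : nat) (f : nat -> R) :
  noetherian R -> is_local_max m -> ideal I -> (0 < l)%N ->
  (forall i, (1 <= i <= l + s)%N -> I (f i)) ->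
  coker_finite m I (span_range f 1 (l + s).+1) (span_range f 1 l) ->
  (exists N, forall n, (N <= n)%N -> forall x,
      ideal_pow I n x <->
      ideal_add (ideal_mul (span_range f 1 l) (ideal_pow I n.-1))
                (ideal_pow (span_range f l (l + s).+1) n) x).
Proof.
move=> noeth lm iI l0 fI [r [gs [Hgs Hy]]].
set a := span_range f 1 l; set J := span_range f l (l + s).+1.
set K := span_range f 1 (l + s).+1.
have ia : ideal a by apply: span_ideal.
have iJ : ideal J by apply: span_ideal.
have im : ideal m by case: lm.
have aI : forall x, a x -> I x.
  by apply: span_sub => // i /andP[h1 h2]; apply: fI; apply/andP; split; lia.
have JI : forall x, J x -> I x.
  by apply: span_sub => // i /andP[h1 h2]; apply: fI; apply/andP; split; lia.
have KaJ : forall x, K x -> ideal_add a J x.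
  by move=> x; apply: span_split; apply/andP; split; lia.
have [Nf HNf] : exists Nf : 'I_r -> nat, forall i n, (Nf i <= n)%N -> gs i n = 0.
  apply: (@fin_all_exists _ (fun=> nat) (fun i (u : nat) => forall n, (u <= n)%N -> gs i n = 0)) => i; case: (Hgs i) => _ [N HN]; by exists N.
pose D := (\max_i Nf i)%N.
exists D.+1 => -[//|n] Hn x; split; last exact: back_inc.
have iIn : ideal (ideal_pow I n.+1) by apply: pow_ideal.
have [p [g Hg]] := noeth _ iIn.
set L := ideal_add _ _.
have iL : ideal L by apply: add_ideal; [apply: mul_ideal => //; apply: pow_ideal | apply: pow_ideal].
apply: (nak_main lm iL Hg) => {}x Ix.
pose y k := if k == n.+1 then x else 0.
have Hyr : homog_rep (ideal_pow I) y.
  split; last by exists n.+2 => k Hk; rewrite /y; case: eqP => // E; lia.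
  move=> k; rewrite /y; case: eqP => [-> //|_]; apply: id0; exact: pow_ideal.
have [cs [Hcs Hd]] := Hy y Hyr.
have := Hd n.+1; rewrite /y eqxx.
set S := \sum_(i < r) _.
have HS : ideal_mul a (ideal_pow I n.+1.-1) S.
  have iC : ideal (ideal_mul a (ideal_pow I n.+1.-1)) by apply: mul_ideal => //; apply: pow_ideal.
  apply: id_sum; [exact: id0 | by move=> ? ?; apply: idD | move=> i _].
  rewrite /conv big_ord_recl /= subn0 (HNf i n.+1); last first.
    apply: leq_trans (leq_bigmax i) _; lia.
  rewrite mulr0 add0r; apply: id_sum; [exact: id0 | by move=> ? ?; apply: idD | move=> k _].
  apply: (@aI_mul _ a I (bump 0 k) n.+1) => //; last first.
  - by case: (Hgs i) => H _; apply: H.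
  - by case: (Hcs i) => H _; apply: H.
  by rewrite /bump /=; have := ltn_ord k; lia.
move=> [kap [mu [Kk Mm E]]].
have -> : x = (S + kap) + mu by rewrite -addrA -E addrC subrK.
exists (S + kap), mu; split => //.
apply: idD => //; first by apply: add_inl => //; apply: pow_ideal.
exact: (KJ ia iJ iI aI JI KaJ).
Qed.


Lemma conv_addl {R : comUnitRingType} (g h k : nat -> R) n :
  conv (fun j => g j + h j) k n = conv g k n + conv h k n.
Proof. by rewrite /conv -big_split; apply: eq_bigr => i _; rewrite mulrDl. Qed.

Lemma conv0 {R : comUnitRingType} (k : nat -> R) n : conv (fun _ => 0) k n = 0.
Proof. by rewrite /conv big1 // => i _; rewrite mul0r. Qed.

Lemma conv_delta {R : comUnitRingType} (c G : R) e d n :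
  conv (fun k => if k == e then c else 0) (fun k => if k == d then G else 0) n =
  if n == (e + d)%N then c * G else 0.
Proof.
rewrite /conv (eq_bigr (fun k : 'I_n.+1 => if (k : nat) == e then
   c * (if (n - k)%N == d then G else 0) else 0)); last first.
  by move=> k _; case: eqP; rewrite ?mul0r.
rewrite -big_mkcond (big_ord1_eq _ (fun k => c * (if (n - k)%N == d then G else 0))).

case: ltnP => h; case: (n =P (e + d)%N) => h1; case: ((n - e)%N =P d) => h2 //; try lia.
by rewrite mulr0.
Qed.


Definition TK {R : comUnitRingType} (a K : R -> Prop) r (deg : 'I_r -> nat) (Gi : 'I_r -> R)
  n x := exists c : 'I_r -> R,
  [/\ forall i, (deg i <= n)%N -> ideal_pow a (n - deg i) (c i),
      forall i, (n < deg i)%N -> c i = 0 &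
      ideal_pow K n (x - \sum_(i < r) c i * Gi i)].

Lemma TK_all {R : comUnitRingType} (I a J K : R -> Prop) N' r (deg : 'I_r -> nat) (Gi : 'I_r -> R) :
  ideal a -> ideal J -> ideal K -> ideal I ->
  (forall x, a x -> K x) -> (forall x, J x -> K x) -> (0 < N')%N ->
  (forall n, (N' <= n)%N -> forall x, ideal_pow I n x ->
      ideal_add (ideal_mul a (ideal_pow I n.-1)) (ideal_pow J n) x) ->
  (forall n, (n < N')%N -> forall x, ideal_pow I n x -> exists c : 'I_r -> R,
      [/\ forall i, (deg i <= n)%N -> ideal_pow a (n - deg i) (c i),
          forall i, (n < deg i)%N -> c i = 0 &
          x = \sum_(i < r) c i * Gi i]) ->
  forall n x, ideal_pow I n x -> TK a K deg Gi n x.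
Proof.
move=> ia iJ iK iI aK JK N0 Heq Hbase n; elim/ltn_ind: n => n IH x Ix.
case: (ltnP n N') => hn.
  have [c [c1 c2 ->]] := Hbase n hn x Ix.
  by exists c; split=> //; rewrite subrr; apply: id0; apply: pow_ideal.
have TK0 : TK a K deg Gi n 0.
  exists (fun _ => 0); split.
  - by move=> i _; apply: id0; apply: pow_ideal.
  - by [].
  - by rewrite big1 ?subrr; [apply: id0; apply: pow_ideal | move=> i _; rewrite mul0r].
have TKD : forall x y, TK a K deg Gi n x -> TK a K deg Gi n y -> TK a K deg Gi n (x + y).
  move=> u v [c [c1 c2 c3]] [c' [c1' c2' c3']].
  exists (fun i => c i + c' i); split.
  - by move=> i h; apply: idD; [apply: pow_ideal | apply: c1 | apply: c1'].
  - by move=> i h; rewrite c2 // c2' // addr0.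
  have -> : u + v - \sum_(i < r) (c i + c' i) * Gi i =
     (u - \sum_(i < r) c i * Gi i) + (v - \sum_(i < r) c' i * Gi i).
    rewrite (eq_bigr (fun i => c i * Gi i + c' i * Gi i)); last by move=> i _; rewrite mulrDl.
    by rewrite big_split /= opprD addrACA.
  by apply: idD => //; apply: pow_ideal.
case: n hn IH Ix TK0 TKD => [|n] hn IH Ix TK0 TKD.
  by move: hn N0; rewrite leqn0 => /eqP ->.
have := Heq _ hn x Ix => -[u [v [Hu Hv ->]]].
apply: (TKD).
  move: Hu; apply: mul_sub; [exact: TK0 | exact: TKD | move=> al w aal Iw].
have [c [c1 c2 c3]] := IH n (ltnSn n) w Iw.
  exists (fun i => al * c i); split.
  - move=> i h /=; case: (ltnP (deg i) n.+1) => h'.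
      rewrite (_ : (n.+1 - deg i)%N = (n - deg i).+1); last by rewrite subSn.
      by apply: mul_in => //; apply: c1.
    rewrite c2 ?mulr0 //.
    by apply: id0; apply: pow_ideal.
  - by move=> i h /=; rewrite c2 ?mulr0 // ltnW.
  have -> : al * w - \sum_(i < r) al * c i * Gi i = al * (w - \sum_(i < r) c i * Gi i).
    by rewrite mulrBr big_distrr /=; congr (_ - _); apply: eq_bigr => i _; rewrite mulrA.
  by apply: mul_in => //; apply: aK.
exists (fun _ => 0); split=> //.
- by move=> i _; apply: id0; apply: pow_ideal.
- rewrite big1 ?subr0; last by move=> i _; rewrite mul0r.
  exact: (pow_mono iK JK).
Qed.


Lemma assemble {R : comUnitRingType} (I a K : R -> Prop) r (deg : 'I_r -> nat) (Gi : 'I_r -> R) :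
  ideal I -> ideal a -> ideal K ->
  (forall n x, ideal_pow I n x -> TK a K deg Gi n x) ->
  forall D (y : nat -> R), (forall n, ideal_pow I n (y n)) -> (forall n, (D <= n)%N -> y n = 0) ->
  exists cs : 'I_r -> nat -> R, (forall i, homog_rep (ideal_pow a) (cs i)) /\
    forall n, ideal_pow K n (y n - \sum_(i < r)
       conv (cs i) (fun k => if k == deg i then Gi i else 0) n).
Proof.
move=> iI ia iK HTK; elim=> [|D IH] y Hy Hb.
  exists (fun _ _ => 0); split.
    by move=> i; split; [move=> n; apply: id0; apply: pow_ideal | exists 0%N].
  move=> n; rewrite Hb // sub0r big1 ?oppr0; first by apply: id0; apply: pow_ideal.
  by move=> i _; apply: conv0.
pose y' n := if n == D then 0 else y n.
have [||cs [Hcs Hd]] := IH y'.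
- by move=> n; rewrite /y'; case: eqP => _; [apply: id0; apply: pow_ideal | apply: Hy].
- move=> n; rewrite /y'; case: eqP => // ne hn; apply: Hb; lia.
have [c [c1 c2 c3]] := HTK D (y D) (Hy D).
exists (fun i k => cs i k + (if k == (D - deg i)%N then c i else 0)); split.
  move=> i; case: (Hcs i) => h1 [N hN]; split.
    move=> k; apply: idD; [exact: pow_ideal | exact: h1 |].
    case: eqP => [->|_]; last by apply: id0; apply: pow_ideal.
    case: (leqP (deg i) D) => h; first exact: c1.
    by rewrite c2 //; apply: id0; apply: pow_ideal.
  exists (maxn N D.+1) => k hk; rewrite hN; last by lia.
  move: hk; rewrite geq_max => /andP[_ hk]; rewrite add0r; case: eqP => // E.
  by move: hk; rewrite E ltnNge leq_subr.
move=> n.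
have convE : forall i, conv (fun k => if k == (D - deg i)%N then c i else 0)
    (fun k => if k == deg i then Gi i else 0) n = if n == D then c i * Gi i else 0.
  move=> i; rewrite conv_delta; case: (leqP (deg i) D) => h.
    by rewrite subnK.
  by rewrite c2 // mul0r !if_same.
rewrite (eq_bigr (fun i => conv (cs i) (fun k => if k == deg i then Gi i else 0) n +
   (if n == D then c i * Gi i else 0))); last first.
  by move=> i _; rewrite conv_addl convE.
rewrite big_split /=.
have -> : y n = y' n + (if n == D then y D else 0).
  by rewrite /y'; case: eqP => [->|]; rewrite ?add0r ?addr0.
rewrite opprD addrACA; apply: idD; [exact: pow_ideal | exact: Hd |].
case: eqP => [->|_]; first by [].
by rewrite big1_eq subrr; apply: id0; exact: pow_ideal.
Qed.


Lemma sum_pairs {R : comUnitRingType} (N M : nat) (F : 'I_N -> 'I_M -> R) :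
  \sum_(i < #|{: 'I_N * 'I_M}|) F (enum_val i).1 (enum_val i).2 = \sum_(j < N) \sum_(t < M) F j t.
Proof.
rewrite pair_bigA /=.
by rewrite (big_enum_val (A := {: 'I_N * 'I_M}) (fun p => F p.1 p.2)).
Qed.

Lemma dir_fwd {R : comUnitRingType} (m I : R -> Prop) (l s : nat) (f : nat -> R) :
  noetherian R -> is_local_max m -> ideal I -> (0 < l)%N ->
  (forall i, (1 <= i <= l + s)%N -> I (f i)) ->
  (exists N, forall n, (N <= n)%N -> forall x,
      ideal_pow I n x <->
      ideal_add (ideal_mul (span_range f 1 l) (ideal_pow I n.-1))
                (ideal_pow (span_range f l (l + s).+1) n) x) ->
  coker_finite m I (span_range f 1 (l + s).+1) (span_range f 1 l).
Proof.
move=> noeth lm iI l0 fI [N0 HN].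
set a := span_range f 1 l; set J := span_range f l (l + s).+1.
set K := span_range f 1 (l + s).+1.
have ia : ideal a by apply: span_ideal.
have iJ : ideal J by apply: span_ideal.
have iK : ideal K by apply: span_ideal.
have im : ideal m by case: lm.
have aK : forall x, a x -> K x by move=> x; apply: span_mono; lia.
have JK : forall x, J x -> K x by move=> x; apply: span_mono; lia.
pose N' := N0.+1.
have [pg Hpg] : exists pg : 'I_N' -> nat * (nat -> R), forall (j : 'I_N') x,
    ideal_pow I j x <-> span_range (pg j).2 0 (pg j).1 x.
  apply: (@fin_all_exists _ (fun=> (nat * (nat -> R))%type)
    (fun (j : 'I_N') (u : nat * (nat -> R)) => forall x, ideal_pow I j x <-> span_range u.2 0 u.1 x)) => j.
  have [p [g Hg]] := noeth _ (pow_ideal j iI).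
  by exists (p, g).
pose M := (\max_(j < N') (pg j).1)%N.
pose G (j : 'I_N') (t : nat) := if (t < (pg j).1)%N then (pg j).2 t else 0.
have GI : forall (j : 'I_N') t, ideal_pow I j (G j t).
  move=> j t; rewrite /G; case: ifP => h; last by apply: id0; apply: pow_ideal.
  by apply/Hpg; apply: span_gen.
pose r := #|{: 'I_N' * 'I_M}|.
pose ev (i : 'I_r) : 'I_N' * 'I_M := enum_val i.
pose deg (i : 'I_r) := nat_of_ord (ev i).1.
pose Gi (i : 'I_r) := G (ev i).1 (ev i).2.
have HTK : forall n x, ideal_pow I n x -> TK a K deg Gi n x.
  apply: (TK_all (J := J) (N' := N')) => //.
    by move=> n hn x Ix; apply/(HN n) => //; apply: ltnW.
  move=> n hn x /(Hpg (Ordinal hn)) [e ->].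
  set j := Ordinal hn.
  exists (fun i => if (ev i).1 == j then e (ev i).2 else 0); split.
  - move=> i h; case: eqP => [E|_]; last by apply: id0; apply: pow_ideal.
    by rewrite /deg E /= subnn.
  - by move=> i h; case: eqP => // E; move: h; rewrite /deg E /= ltnn.
  rewrite (sum_pairs (fun j' t => (if j' == j then e t else 0) * G j' t)).
  rewrite [RHS](bigD1 j) //= [X in _ + X]big1 ?addr0; last first.
    by move=> j' hj; apply: big1 => t _; rewrite ifF ?mul0r //; apply/negbTE.
  rewrite eqxx big_mkord.
  have hM : ((pg j).1 <= M)%N.
    by rewrite /M; exact: (@leq_bigmax _ (fun j0 : 'I_N' => (pg j0).1) j).
  rewrite (big_ord_widen _ (fun t => e t * (pg j).2 t) hM) big_mkcond.
  by apply: eq_bigr => t _; rewrite /G; case: ifP; rewrite ?mulr0.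
exists r, (fun i n => if n == deg i then Gi i else 0); split.
  move=> i; split; last by exists (deg i).+1 => n hn; case: eqP => // E; lia.
  by move=> n; case: eqP => [->|_]; [apply: GI | apply: id0; apply: pow_ideal].
move=> y [Hy [D HD]].
have [cs [Hcs Hd]] := assemble iI ia iK HTK Hy HD.
exists cs; split=> // n.
apply: add_inl; [by apply: mul_ideal => //; apply: pow_ideal | exact: Hd].
Qed.

Theorem corollary2p6 (R : comUnitRingType) (m I : R -> Prop) (l s : nat)
  (f : nat -> R) :
  noetherian R -> is_local_max m -> ideal I ->
  analytic_spread m I l -> (0 < l)%N ->
  (forall i, (1 <= i <= l + s)%N -> I (f i)) ->
  ((exists N, forall n, (N <= n)%N -> forall x,
      ideal_pow I n x <->
      ideal_add (ideal_mul (span_range f 1 l) (ideal_pow I n.-1))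
                (ideal_pow (span_range f l (l + s).+1) n) x)
   <-> coker_finite m I (span_range f 1 (l + s).+1) (span_range f 1 l)).
Proof.
move=> noeth lm iI _ l0 fI; split.
  exact: dir_fwd.
exact: dir_back.
Qed.
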